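(* Let $b\ge2$, $n\ge1$ be integers and $\mathcal D=\{d,\dots,d+b-1\}$ a set of consecutive integers containing $0$. The state space of the $n$-carry process over $(-b,\mathcal D)$ is $\Omega_n(-b,\mathcal D)=\{s,s+1,\dots,t\}$ with $$s=-\lceil (n-1)(-l)\rceil=\lfloor (n-1)l\rfloor,\qquad t=\lceil (n-1)(l+1)\rceil,\qquad l=\frac{-d-b}{b+1}.$$ Consequently $\#\Omega_n(-b,\mathcal D)=n+1$ if $(n-1)l\notin\mathbb Z$ and $=n$ if $(n-1)l\in\mathbb Z$.
   Context: Carries process over the negative base $(-b,\mathcal D)$: let $\{X_{k,i}\}_{1\le k\le n,\ i\ge0}$ be independent random variables, each uniformly distributed on $\mathcal D$. Set $C_0=0$; for $i\ge0$ let $A_i$ be the unique element of $\mathcal D$ with $A_i\equiv C_i+X_{1,i}+\dots+X_{n,i}\pmod b$, and set $C_{i+1}=(C_i+X_{1,i}+\dots+X_{n,i}-A_i)/(-b)$. The state space $\Omega_n(-b,\mathcal D)$ is the set of integers $c$ with $\Pr(C_i=c)>0$ for some $i\ge0$. *)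

(* Defs.v *)
From HB Require Import structures.
From mathcomp Require Import all_boot all_order all_algebra.
Set Implicit Arguments. Unset Strict Implicit. Unset Printing Implicit Defensive.
Import Order.TTheory GRing.Theory Num.Theory.
Local Open Scope ring_scope.

(* Digit set D = {d, ..., d+b-1}; a digit is encoded as d + k with k : 'I_b. *)
Definition digit (b : nat) (d : int) (k : 'I_b) : int := d + (k : nat)%:Z.

(* A = the unique element of D congruent to x mod b. *)
Definition Adigit (b : nat) (d : int) (x : int) : int :=
  d + ((x - d) %% (b%:Z))%Z.

(* One step of the carries process: given C_i and the column sum
   X_{1,i}+...+X_{n,i}, return C_{i+1} = (C_i + sum - A_i)/(-b). *)
Definition carry_step (b : nat) (d : int) (c sum : int) : int :=
  ((c + sum - Adigit b d (c + sum)) %/ (- (b%:Z)))%Z.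

(* C_i as a function of the realised digits X_{j,k} (0 <= k < i, 0 <= j < n),
   with C_0 = 0. *)
Definition carry_at (b n : nat) (d : int) (i : nat)
    (X : {ffun 'I_i * 'I_n -> 'I_b}) : int :=
  foldl (carry_step b d) 0
    [seq \sum_(j < n) @digit b d (X (k, j)) | k <- enum 'I_i].

(* Pr(C_i = c) for independent uniform digits: the uniform probability on the
   b^(i*n) equally likely digit arrays. *)
Definition carry_prob (b n : nat) (d : int) (i : nat) (c : int) : rat :=
  (#|[set X : {ffun 'I_i * 'I_n -> 'I_b} | @carry_at b n d i X == c]|)%:R
  / (#|{ffun 'I_i * 'I_n -> 'I_b}|)%:R.

Definition in_state_space (b n : nat) (d : int) (c : int) : Prop :=
  exists i : nat, 0 < carry_prob b n d i c.

(* Main.v *)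
Require Import Defs.
From HB Require Import structures.
From mathcomp Require Import all_boot all_order all_algebra.
Import Order.TTheory GRing.Theory Num.Theory.
Local Open Scope ring_scope.
From mathcomp Require Import zify ring lra.
From Stdlib Require Import Classical.

Definition inrange (b n : nat) (d S : int) :=
  (n%:Z * d <= S) && (S <= n%:Z * (d + b%:Z - 1)).
Definition reach b n d c :=
  exists l : seq int, all (inrange b n d) l /\ foldl (carry_step b d) 0 l = c.

Lemma sum_digit (b n : nat) (d : int) (f : 'I_n -> 'I_b) :
  \sum_(j < n) digit d (f j) = n%:Z * d + (\sum_(j < n) (f j : nat))%:Z.
Proof.
rewrite /digit big_split /= sumr_const card_ord -mulr_natl natz.
congr (_ + _); rewrite -[RHS]natz natr_sum; apply: eq_bigr => i _; by rewrite natz.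
Qed.

Lemma sum_bound (b n : nat) (f : 'I_n -> 'I_b) :
  (\sum_(j < n) (f j : nat) <= n * b.-1)%N.
Proof.
apply: leq_trans (_ : \sum_(j < n) b.-1 <= _)%N.
  apply: leq_sum => j _; have := ltn_ord (f j); lia.
by rewrite sum_nat_const card_ord.
Qed.

Definition dig (b e j : nat) : nat := minn b.-1 (e - j * b.-1).

Lemma sum_dig (b e n : nat) :
  (\sum_(j < n) dig b e j = minn e (n * b.-1))%N.
Proof.
elim: n => [|n IH]; first by rewrite big_ord0; lia.
rewrite big_ord_recr /= IH /dig; lia.
Qed.

Lemma dig_lt (b e j : nat) : (0 < b)%N -> (dig b e j < b)%N.
Proof. rewrite /dig; lia. Qed.

Lemma ss_reach (b n : nat) (d c : int) : (0 < b)%N ->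
  in_state_space b n d c <-> reach b n d c.
Proof.
move=> hb; split.
- case=> i; rewrite /carry_prob.
  case: (posnP #|[set X : {ffun 'I_i * 'I_n -> 'I_b} | @carry_at b n d i X == c]|) => [->|hA _].
    by rewrite mul0r ltxx.
  move: hA; rewrite card_gt0 => /set0Pn [X]; rewrite inE => /eqP <-.
  exists [seq \sum_(j < n) @digit b d (X (k, j)) | k <- enum 'I_i]; split=> //.
  apply/allP => S /mapP [k _ ->]; rewrite /inrange sum_digit.
  have /= := @sum_bound _ _ (fun j => X (k, j)).
  have : (n <= n * b)%N by rewrite leq_pmulr.
  rewrite -subn1 mulnBr muln1; lia.
- case=> l [hl <-]; exists (size l).
  pose e (S : int) : nat := absz (S - n%:Z * d)%R.
  pose X : {ffun 'I_(size l) * 'I_n -> 'I_b} :=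
    [ffun p : 'I_(size l) * 'I_n => Ordinal (@dig_lt b (e (nth 0 l p.1)) p.2 hb)].
  have hX : @carry_at b n d (size l) X = foldl (carry_step b d) 0 l.
    rewrite /carry_at; congr foldl.
    have -> : [seq \sum_(j < n) @digit b d (X (k, j)) | k <- enum 'I_(size l)]
            = [seq nth 0 l (val k) | k <- enum 'I_(size l)].
      apply: eq_map => k; rewrite [in RHS](_ : val k = nat_of_ord k) //.
      have : inrange b n d (nth 0 l k) by apply: (allP hl); apply: mem_nth.
      rewrite sum_digit.
      have -> : (\sum_(j < n) (X (k, j) : nat) = minn (e (nth 0%R l k)) (n * b.-1))%N.
        rewrite -sum_dig; apply: eq_bigr => j _; by rewrite ffunE.
      have : (n <= n * b)%N by rewrite leq_pmulr.
      rewrite /inrange /e -subn1 mulnBr muln1; lia.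
    transitivity (map (nth 0%R l) (map val (enum 'I_(size l)))).
      by rewrite -map_comp.
    by rewrite val_enum_ord; have := mkseq_nth 0%R l; rewrite /mkseq.
  rewrite /carry_prob; apply: divr_gt0; rewrite ltr0n.
    by rewrite card_gt0; apply/set0Pn; exists X; rewrite inE hX.
  by rewrite card_ffun card_ord expn_gt0 hb.
Qed.

Lemma inv_step (B N d S0 T0 c S z : int) :
  2 <= B -> 1 <= N -> d <= 0 -> 0 <= d + B - 1 ->
  (B+1)*S0 <= (N-1)*(-d-B) -> (N-1)*(-d-B) < (B+1)*(S0+1) ->
  (B+1)*(T0-1) < (N-1)*(1-d) -> (N-1)*(1-d) <= (B+1)*T0 ->
  S0 <= c -> c <= T0 -> N*d <= S -> S <= N*(d+B-1) ->
  -z*B <= c+S-d -> c+S-d < (-z+1)*B -> S0 <= z /\ z <= T0.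
Proof.
move=> *; split.
- nia.
- nia.
Qed.

Lemma fin_step (B N d S0 T0 a c : int) :
  2 <= B -> 1 <= N -> d <= 0 -> 0 <= d + B - 1 ->
  (B+1)*S0 <= (N-1)*(-d-B) -> (N-1)*(-d-B) < (B+1)*(S0+1) ->
  (B+1)*(T0-1) < (N-1)*(1-d) -> (N-1)*(1-d) <= (B+1)*T0 ->
  a <= 0 -> 0 <= c ->
  ~ (-(a-1)*B <= c + N*(d+B-1) - d /\ a + N*d - d <= -(a-1)*B + B - 1) ->
  ~ (-(c+1)*B <= c + N*(d+B-1) - d /\ a + N*d - d <= -(c+1)*B + B - 1) ->
  a <= S0 /\ T0 <= c.
Proof.
move=> hB hN hd0 hd1 hs1 hs2 ht1 ht2 ha hc n1 n2.
have h1 : c + N*(d+B-1) - d < -(a-1)*B.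
  rewrite ltNge; apply/negP=> h; apply: n1; split=> //. Timeout 20 nia.
have h2 : -(c+1)*B + B - 1 < a + N*d - d.
  rewrite ltNge; apply/negP=> h; apply: n2; split=> //. Timeout 20 nia.
clear n1 n2.
have h3 : 0 <= (a + c*B + (N-1)*d) * B by apply: mulr_ge0; lia.
have h4 : (B-1)*((N-1)*(1-d)) <= (B-1)*((B+1)*c).
  Timeout 20 lia.
have h5 : (N-1)*(1-d) <= (B+1)*c.
  by rewrite -(ler_pM2l (_ : 0 < B-1)) //; lia.
have h6 : 0 <= ((N-1)*(-d) - c - (N-1)*(B-1) - B*a) * B by apply: mulr_ge0; lia.
have h8 : (B-1)*((B+1)*a) <= (B-1)*((N-1)*(-d-B)).
  Timeout 20 lia.
have h9 : ((B+1)*a) <= ((N-1)*(-d-B)).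
  by rewrite -(ler_pM2l (_ : 0 < B-1)) //; lia.
split.
have : (B+1)*a < (B+1)*(S0+1) by lia.
rewrite ltr_pM2l; lia.
have : (B+1)*(T0-1) < (B+1)*c by lia.
rewrite ltr_pM2l; lia.
Qed.

Lemma step_eq (b : nat) (d c S : int) : (0 < b)%N ->
  carry_step b d c S = - ((c + S - d) %/ b%:Z)%Z.
Proof.
move=> hb; rewrite /carry_step /Adigit.
set x := c + S - d.
have -> : c + S - (d + (x %% b%:Z)%Z) = (x %/ b%:Z)%Z * b%:Z.
  have e := divz_eq x b%:Z; rewrite /x in e *; lia.
rewrite divzN mulzK //; lia.
Qed.

Lemma step_spec (b : nat) (d c S : int) : (0 < b)%N ->
  - carry_step b d c S * b%:Z <= c + S - d < (- carry_step b d c S + 1) * b%:Z.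
Proof.
move=> hb; rewrite step_eq // opprK; apply/andP; split.
  by apply: lez_floor; lia.
by apply: ltz_ceil; lia.
Qed.

Lemma step_intro (b : nat) (d c S z : int) : (0 < b)%N ->
  - z * b%:Z <= c + S - d -> c + S - d < (- z + 1) * b%:Z ->
  carry_step b d c S = z.
Proof.
move=> hb h1 h2; rewrite step_eq //.
have hb' : 0 < b%:Z by lia.
have := h1; rewrite -(lez_divRL _ _ hb') => h3.
have := h2; rewrite -(ltz_divLR _ _ hb') => h4.
lia.
Qed.

Lemma reach0 b n d : reach b n d 0.
Proof. by exists [::]. Qed.

Lemma reach_step b n d c S : reach b n d c -> inrange b n d S ->
  reach b n d (carry_step b d c S).
Proof.
case=> l [hl <-] hS; exists (rcons l S); split.
  by rewrite all_rcons hS hl.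
by rewrite -cats1 foldl_cat.
Qed.

Lemma reach_inv (b n : nat) (d S0 T0 : int) : (2 <= b)%N -> (1 <= n)%N ->
  d <= 0 -> 0 <= d + b%:Z - 1 ->
  (b%:Z+1)*S0 <= (n%:Z-1)*(-d-b%:Z) -> (n%:Z-1)*(-d-b%:Z) < (b%:Z+1)*(S0+1) ->
  (b%:Z+1)*(T0-1) < (n%:Z-1)*(1-d) -> (n%:Z-1)*(1-d) <= (b%:Z+1)*T0 ->
  forall c, reach b n d c -> S0 <= c <= T0.
Proof.
move=> hb hn hd0 hd1 hs1 hs2 ht1 ht2 c [l [hl <-]].
have : S0 <= 0 <= T0 by apply/andP; split; nia.
elim: l 0 hl => [|S l IH] c0 //= /andP [hS hl] hc0.
apply: IH => //.
have := @step_spec b d c0 S (ltnW hb).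
move: hS; rewrite /inrange => /andP [h1 h2] /andP [h3 h4].
case/andP: hc0 => h5 h6.
have [] := @inv_step b%:Z n%:Z d S0 T0 c0 S (carry_step b d c0 S).
  1-14: by [|lia].
by move=> -> ->.
Qed.

Lemma closure_int (b n : nat) (d a c z : int) : (1 <= b)%N ->
  (forall x, a <= x <= c -> reach b n d x) -> a <= c ->
  - z * b%:Z <= c + n%:Z * (d + b%:Z - 1) - d ->
  a + n%:Z * d - d <= - z * b%:Z + b%:Z - 1 ->
  reach b n d z.
Proof.
move=> hb hR hac h1 h2.
have hNB : 0 <= n%:Z * (b%:Z - 1) by apply: mulr_ge0; lia.
have [y [hy1 hy2 hy3 hy4]] : exists y, [/\ - z * b%:Z <= y, y <= - z * b%:Z + b%:Z - 1,
    a + n%:Z * d - d <= y & y <= c + n%:Z * (d + b%:Z - 1) - d].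
  case: (lerP (- z * b%:Z) (a + n%:Z * d - d)) => h.
    by exists (a + n%:Z * d - d); split; lia.
  by exists (- z * b%:Z); split; lia.
have [C [hC1 hC2 hC3 hC4]] : exists C, [/\ a <= C, C <= c,
    C <= y + d - n%:Z * d & y + d - n%:Z * (d + b%:Z - 1) <= C].
  case: (lerP a (y + d - n%:Z * (d + b%:Z - 1))) => h.
    by exists (y + d - n%:Z * (d + b%:Z - 1)); split; lia.
  by exists a; split; lia.
have -> : z = carry_step b d C (y - C + d).
  apply/esym/step_intro; lia.
apply: reach_step; first by apply: hR; lia.
rewrite /inrange; apply/andP; split; lia.
Qed.

Lemma nat_max (Q : nat -> Prop) (N : nat) : Q 0%N -> ~ Q N ->
  exists j, (forall k, (k <= j)%N -> Q k) /\ ~ Q j.+1.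
Proof.
move=> h0 hN.
have : forall M, (forall k, (k <= M)%N -> Q k) \/
    exists j, (forall k, (k <= j)%N -> Q k) /\ ~ Q j.+1.
  elim=> [|M [IH|IH]]; last by right.
  - by left=> k; rewrite leqn0 => /eqP ->.
  - case: (classic (Q M.+1)) => h.
      left=> k; rewrite leq_eqVlt => /orP [/eqP -> //|]; rewrite ltnS; exact: IH.
    by right; exists M.
case/(_ N) => // H; exfalso; apply: hN; exact: H.
Qed.

Lemma ext_low (P : int -> Prop) (L : int) : P 0 -> (forall x, P x -> L <= x) ->
  exists a, [/\ a <= 0, (forall x, a <= x <= 0 -> P x) & ~ P (a - 1)].
Proof.
move=> h0 hL.
have hN : ~ P (- (((absz L).+1)%:Z)).
  by move=> h; have := hL _ h; lia.
have [j [hj1 hj2]] := @nat_max (fun k => P (- (k%:Z))) (absz L).+1 h0 hN.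
exists (- (j%:Z)); split; first lia.
  move=> x hx; have -> : x = - ((absz x)%:Z) by lia.
  apply: hj1; lia.
by have -> : - j%:Z - 1 = - (j.+1%:Z) by lia.
Qed.

Lemma ext_high (P : int -> Prop) (U : int) : P 0 -> (forall x, P x -> x <= U) ->
  exists c, [/\ 0 <= c, (forall x, 0 <= x <= c -> P x) & ~ P (c + 1)].
Proof.
move=> h0 hU.
have hN : ~ P (((absz U).+1)%:Z).
  by move=> h; have := hU _ h; lia.
have [j [hj1 hj2]] := @nat_max (fun k => P (k%:Z)) (absz U).+1 h0 hN.
exists (j%:Z); split; first lia.
  move=> x hx; have -> : x = ((absz x)%:Z) by lia.
  apply: hj1; lia.
by have -> : j%:Z + 1 = (j.+1%:Z) by lia.
Qed.

Lemma core (b n : nat) (d S0 T0 : int) : (2 <= b)%N -> (1 <= n)%N ->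
  d <= 0 -> 0 <= d + b%:Z - 1 ->
  (b%:Z+1)*S0 <= (n%:Z-1)*(-d-b%:Z) -> (n%:Z-1)*(-d-b%:Z) < (b%:Z+1)*(S0+1) ->
  (b%:Z+1)*(T0-1) < (n%:Z-1)*(1-d) -> (n%:Z-1)*(1-d) <= (b%:Z+1)*T0 ->
  forall c, reach b n d c <-> S0 <= c <= T0.
Proof.
move=> hb hn hd0 hd1 hs1 hs2 ht1 ht2 c; split.
  exact: (@reach_inv _ _ _ _ _ hb hn hd0 hd1 hs1 hs2 ht1 ht2).
have inv := @reach_inv _ _ _ _ _ hb hn hd0 hd1 hs1 hs2 ht1 ht2.
have [a [ha0 haR haN]] := @ext_low (reach b n d) S0 (reach0 b n d)
  (fun x h => proj1 (andP (inv x h))).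
have [c' [hc0 hcR hcN]] := @ext_high (reach b n d) T0 (reach0 b n d)
  (fun x h => proj2 (andP (inv x h))).
have hR : forall x, a <= x <= c' -> reach b n d x.
  move=> x hx; case: (lerP x 0) => h; [apply: haR | apply: hcR]; lia.
have hb1 : (1 <= b)%N by apply: ltnW.
have [] := @fin_step b%:Z n%:Z d S0 T0 a c'.
  1-10: by [|lia].
- move=> [k1 k2]; apply: haN; apply: (@closure_int _ _ _ _ _ _ hb1 hR) => //; lia.
- move=> [k1 k2]; apply: hcN; apply: (@closure_int _ _ _ _ _ _ hb1 hR) => //; lia.
move=> k1 k2 hc; apply: hR; lia.
Qed.

Lemma floor_frac (p q : int) : 0 < q ->
  q * Num.floor (p%:~R / q%:~R : rat) <= p < q * (Num.floor (p%:~R / q%:~R : rat) + 1).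
Proof.
move=> hq; have hq' : (0 : rat) < q%:~R by rewrite ltr0z.
case/andP: (floor_itv (p%:~R / q%:~R : rat)) => h1 h2.
rewrite ler_pdivlMr // -intrM ler_int in h1.
rewrite ltr_pdivrMr // -intrM ltr_int in h2.
by rewrite mulrC h1 mulrC h2.
Qed.

Lemma ceil_frac (p q : int) : 0 < q ->
  q * (Num.ceil (p%:~R / q%:~R : rat) - 1) < p <= q * Num.ceil (p%:~R / q%:~R : rat).
Proof.
move=> hq; have hq' : (0 : rat) < q%:~R by rewrite ltr0z.
case/andP: (ceil_itv (p%:~R / q%:~R : rat)) => h1 h2.
rewrite ltr_pdivlMr // -intrM ltr_int in h1.
rewrite ler_pdivrMr // -intrM ler_int in h2.
by rewrite mulrC h1 mulrC h2.
Qed.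

Theorem lemma6 (b n : nat) (d : int) (hb : (2 <= b)%N) (hn : (1 <= n)%N)
    (hd0 : d <= 0) (hd1 : 0 <= d + (b%:Z - 1)) :
  let l : rat := (- d - b%:Z)%:~R / (b%:Z + 1)%:~R in
  let s : int := Num.floor ((n%:Z - 1)%:~R * l) in
  let t : int := Num.ceil ((n%:Z - 1)%:~R * (l + 1)) in
  s = - Num.ceil ((n%:Z - 1)%:~R * (- l)) /\
  (forall c : int, in_state_space b n d c <-> s <= c <= t) /\
  exists sq : seq int,
    uniq sq /\ (forall c : int, c \in sq <-> in_state_space b n d c) /\
    size sq = (if (n%:Z - 1)%:~R * l \is a Num.int then n else n.+1).
Proof.
move=> l s t.
have hq : 0 < b%:Z + 1 by lia.
have hB0 : (b%:Z + 1)%:~R != 0 :> rat by rewrite intr_eq0; lia.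
have eX : (n%:Z - 1)%:~R * l = ((n%:Z - 1) * (- d - b%:Z))%:~R / (b%:Z + 1)%:~R.
  by rewrite /l mulrA intrM.
have eY : (n%:Z - 1)%:~R * (l + 1) = ((n%:Z - 1) * (1 - d))%:~R / (b%:Z + 1)%:~R.
  have e1 : l + 1 = (1 - d)%:~R / (b%:Z + 1)%:~R.
    apply: (mulIf hB0); rewrite mulrDl /l !divfK // mul1r -intrD; congr (_%:~R); ring.
  by rewrite e1 mulrA intrM.
have [hs1 hs2] : (b%:Z+1)*s <= (n%:Z-1)*(-d-b%:Z) /\ (n%:Z-1)*(-d-b%:Z) < (b%:Z+1)*(s+1).
  by have /andP[] := floor_frac ((n%:Z-1)*(-d-b%:Z)) _ hq; rewrite /s eX.
have [ht1 ht2] : (b%:Z+1)*(t-1) < (n%:Z-1)*(1-d) /\ (n%:Z-1)*(1-d) <= (b%:Z+1)*t.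
  by have /andP[] := ceil_frac ((n%:Z-1)*(1-d)) _ hq; rewrite /t eY.
have hd1' : 0 <= d + b%:Z - 1 by lia.
have C := @core b n d s t hb hn hd0 hd1' hs1 hs2 ht1 ht2.
have SS : forall c, in_state_space b n d c <-> s <= c <= t.
  move=> c; rewrite ss_reach; [exact: C | exact: ltnW].
split; first by rewrite ceilNfloor mulrN !opprK.
split; first exact: SS.
have ht : t = s + (n%:Z - 1) + ((n%:Z - 1)%:~R * l \isn't a Num.int).
  rewrite /t mulrDr mulr1 ceilDrz ?intr_int // intrKceil ceil_floor -/s; ring.
have hst : s <= t by rewrite ht; case: (_ \isn't a Num.int); lia.
exists [seq s + (k%:Z) | k <- iota 0 (absz (t - s + 1))]; split.
  rewrite map_inj_uniq ?iota_uniq //; move=> x y /= /addrI; lia.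
split.
  move=> c; rewrite SS; split.
    by case/mapP => k; rewrite mem_iota => hk ->; lia.
  move=> hc; apply/mapP; exists (absz (c - s)); last by lia.
  rewrite mem_iota; lia.
rewrite size_map size_iota ht.
by case: (_ \is a Num.int) => /=; lia.
Qed.
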